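(* Let $C\subseteq\mathbb F_2^n$ be a classical linear code of distance $d$ with dual code $C^\perp$, let $1\le t\le n$, and let $\Gamma_t=\{\gamma\subseteq[n]: |\gamma|=t\}$, so that $\hat\Gamma=\Gamma_{\le t}=\{e\subseteq[n]: 0<|e|\le t\}$. Let $D$ be the real matrix with rows indexed by $s\in C^\perp\setminus\{0\}$, columns indexed by $a\in\Gamma_{\le t}$, and entries $D[s,a]=1$ if $a\subseteq s$ and $0$ otherwise. If $d\ge 2t+1$, then $D$ has full rank (rank $|\Gamma_{\le t}|$).
   Context: $C^\perp=\{a\in\mathbb F_2^n: a\cdot c=0\ \forall c\in C\}$. The distance of $C$ is $d=\min\{\mathrm{wt}(c): c\in C\setminus\{0\}\}$. Vectors in $\mathbb F_2^n$ are identified with their support sets in $[n]$. *)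

(* Defs.v *)
From HB Require Import structures.
From mathcomp Require Import all_boot all_order all_algebra.
Set Implicit Arguments. Unset Strict Implicit. Unset Printing Implicit Defensive.
Import GRing.Theory Num.Theory.
Local Open Scope ring_scope.

Definition word n := 'rV['F_2]_n.

Definition supp n (v : word n) : {set 'I_n} := [set i | v 0 i != 0].

Definition wt n (v : word n) : nat := #|supp v|.

Definition dotF2 n (a c : word n) : 'F_2 := (a *m c^T) 0 0.

(* a binary linear code: an F_2-subspace (over F_2 = additive subgroup) *)
Definition is_linear_code n (C : {set word n}) : Prop :=
  0 \in C /\ (forall x y, x \in C -> y \in C -> x + y \in C).

Definition dual_code n (C : {set word n}) : {set word n} :=
  [set a | [forall c in C, dotF2 a c == 0]].

Definition Sperp n (C : {set word n}) : {set word n} :=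
  [set s in dual_code C | s != 0].

Definition Gamma_le n (t : nat) : {set {set 'I_n}} :=
  [set e : {set 'I_n} | (0 < #|e|)%N && (#|e| <= t)%N].

Definition Dmat (R : nzRingType) n (C : {set word n}) (t : nat)
  : 'M[R]_(#|Sperp C|, #|Gamma_le n t|) :=
  \matrix_(i, j) (if (enum_val j : {set 'I_n}) \subset supp (enum_val i : word n)
                  then 1 else 0).

(* Main.v *)
Require Import Defs.
From HB Require Import structures.
From mathcomp Require Import all_boot all_order all_algebra.
From mathcomp Require Import ring lra zify.
Set Implicit Arguments. Unset Strict Implicit. Unset Printing Implicit Defensive.
Import GRing.Theory Num.Theory.
Local Open Scope ring_scope.

Section S.
Variable R : realFieldType.
Variable n : nat.

Definition sg (x : 'F_2) : R := if x == 0 then 1 else -1.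

Lemma F2_cases (x : 'F_2) : x = 0 \/ x = 1.
Proof. case: x => [[|[|m]] Hm]; [left|right|]; try by apply: val_inj.
by []. Qed.

Lemma sgD x y : sg (x + y) = sg x * sg y.
Proof.
by case: (F2_cases x) => ->; case: (F2_cases y) => ->; rewrite /sg /= ?mulr1 ?mul1r ?mulrNN ?mulr1.
Qed.

Lemma sg_nat k : sg (k%:R) = (-1) ^+ k.
Proof.
elim: k => [|k IH]; first by rewrite /sg eqxx.
by rewrite mulrSr sgD IH exprS mulrC /sg /=.
Qed.

Lemma dotDl (s s' w : word n) : dotF2 (s + s') w = dotF2 s w + dotF2 s' w.
Proof. by rewrite /dotF2 mulmxDl mxE. Qed.

Lemma dotDr (s w w' : word n) : dotF2 s (w + w') = dotF2 s w + dotF2 s w'.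
Proof. by rewrite /dotF2 linearD /= mulmxDr mxE. Qed.

Lemma dotC (s w : word n) : dotF2 s w = dotF2 w s.
Proof. by rewrite /dotF2 !mxE; apply: eq_bigr => i _; rewrite !mxE mulrC. Qed.

Lemma dot0l (w : word n) : dotF2 0 w = 0.
Proof. by rewrite /dotF2 mul0mx mxE. Qed.


Lemma dual_add (C : {set word n}) s s' : s \in dual_code C -> s' \in dual_code C -> s + s' \in dual_code C.
Proof.
rewrite !inE => /forall_inP H /forall_inP H'; apply/forall_inP => c Hc.
by rewrite dotDl (eqP (H c Hc)) (eqP (H' c Hc)) addr0.
Qed.

Lemma dual0 (C : {set word n}) : 0 \in dual_code C.
Proof. by rewrite inE; apply/forall_inP => c _; rewrite dot0l. Qed.

Lemma double_dual (C : {set word n}) : is_linear_code C ->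
  forall w, (forall s, s \in dual_code C -> dotF2 s w = 0) -> w \in C.
Proof.
move=> [C0 CD] w Hw.
pose A : 'M['F_2]_(#|C|, n) := \matrix_(i, j) (enum_val i : word n) 0 j.
have rowA i : row i A = enum_val i by apply/rowP => j; rewrite !mxE.
have Cl v : (v <= A)%MS -> v \in C.
  move/submxP => [D ->]; rewrite mulmx_sum_row.
  apply: (big_ind (fun v => v \in C)) => // i _.
  case: (F2_cases (D 0 i)) => ->; first by rewrite scale0r.
  by rewrite scale1r rowA; exact: enum_valP.
pose K := kermx A^T.
have dotA r i : dotF2 r (enum_val i) = (r *m A^T) 0 i.
  by rewrite /dotF2 !mxE; apply: eq_bigr => j _; rewrite !mxE.
have Kd r : (r <= K)%MS -> r \in dual_code C.
  rewrite sub_kermx => /eqP rA; rewrite inE; apply/forall_inP => c Hc.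
  by rewrite -(enum_rankK_in C0 Hc) dotA rA mxE.
have wK : w *m K^T = 0.
  apply/rowP => i; rewrite [RHS]mxE.
  transitivity (dotF2 w (row i K)).
    by rewrite /dotF2 !mxE; apply: eq_bigr => j _; rewrite !mxE.
  by rewrite dotC Hw // Kd // row_sub.
have AK : (A <= kermx K^T)%MS.
  by rewrite sub_kermx -{1}(trmxK A) -trmx_mul mulmx_ker trmx0.
have KA : (kermx K^T <= A)%MS.
  have := mxrank_leqif_sup AK; case=> _ <-.
  rewrite !mxrank_ker !mxrank_tr mxrank_ker mxrank_tr.
  by rewrite subKn ?rank_leq_col.
by apply: Cl; apply: submx_trans KA; rewrite sub_kermx wK.
Qed.


Definition wvec (B : {set 'I_n}) : word n := \row_i (if i \in B then 1 else 0).
Definition chi (w s : word n) : R := sg (dotF2 s w).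

Lemma dot_wvec s B : dotF2 s (wvec B) = \sum_(i in B) s 0 i.
Proof.
rewrite /dotF2 mxE [RHS]big_mkcond /=; apply: eq_bigr => i _; rewrite !mxE.
by case: (i \in B); rewrite ?mulr1 ?mulr0.
Qed.

Lemma sum_inv0 (T : finType) (P : pred T) (f : T -> T) (F : T -> R) :
  involutive f -> (forall x, P (f x) = P x) -> (forall x, P x -> F (f x) = - F x) ->
  \sum_(x | P x) F x = 0.
Proof.
move=> hf hP hF.
have E : \sum_(x | P x) F x = \sum_(x | P x) F (f x).
  by rewrite (reindex_inj (inv_inj hf)); apply: eq_bigl => x; rewrite hP.
rewrite [in RHS](eq_bigr (fun x => - F x)) ?sumrN // in E.
move: E; set S := \sum_(x | P x) F x => E; lra.
Qed.

Lemma addxx (x : 'F_2) : x + x = 0.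
Proof. case: (F2_cases x) => ->; first by rewrite addr0. by apply: val_inj. Qed.

Lemma addvv (v : word n) : v + v = 0.
Proof. by apply/rowP => i; rewrite !mxE addxx. Qed.

Lemma chiD w s s' : chi w (s + s') = chi w s * chi w s'.
Proof. by rewrite /chi dotDl sgD. Qed.

Lemma chiDw w w' s : chi (w + w') s = chi w s * chi w' s.
Proof. by rewrite /chi dotDr sgD. Qed.

Lemma char_sum0 (C : {set word n}) w s0 : s0 \in dual_code C -> dotF2 s0 w != 0 ->
  \sum_(s in dual_code C) chi w s = 0.
Proof.
move=> Hs0 Hne.
apply: (@sum_inv0 _ _ (fun s => s + s0)).
- by move=> s; rewrite -addrA addvv addr0.
- move=> s; apply/idP/idP => H; last exact: dual_add.
  by rewrite -(addr0 s) -(addvv s0) addrA; apply: dual_add.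
- move=> s _; rewrite chiD /chi; case: (F2_cases (dotF2 s0 w)) Hne => -> //= _.
  by rewrite /sg /= mulrN1.
Qed.


Lemma chi_sq w s : chi w s * chi w s = 1.
Proof. by rewrite /chi /sg; case: ifP; rewrite ?mulr1 ?mulrNN ?mulr1. Qed.

Lemma orth (C : {set word n}) t : is_linear_code C ->
  (forall c, c \in C -> c != 0 -> (2 * t + 1 <= wt c)%N) ->
  forall B b : {set 'I_n}, (#|B| <= t)%N -> (#|b| <= t)%N ->
  \sum_(s in dual_code C) chi (wvec b) s * chi (wvec B) s =
    if B == b then (#|dual_code C|)%:R else 0.
Proof.
move=> Hlin Hd B b HB Hb.
case: eqP => [->|Hne].
  by rewrite (eq_bigr (fun _ => 1)) ?sumr_const // => s _; rewrite chi_sq.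
rewrite (eq_bigr (fun s => chi (wvec b + wvec B) s)); last by move=> s _; rewrite chiDw.
set w := wvec b + wvec B.
have wnC : w \notin C.
  apply/negP => wC.
  have wn0 : w != 0.
    apply/eqP => w0; apply: Hne; apply/setP => i.
    have := congr1 (fun v : word n => v 0 i) w0; rewrite !mxE.
    by case: (i \in B); case: (i \in b) => //= /eqP.
  have := Hd _ wC wn0.
  have : (wt w <= #|b| + #|B|)%N.
    apply: leq_trans (leq_card_setU b B).
    apply: subset_leq_card; apply/subsetP => i; rewrite !inE !mxE.
    by case: (i \in B); case: (i \in b).
  lia.
case: (boolP [exists s in dual_code C, dotF2 s w != 0]).
  by case/exists_inP => s0 Hs0 Hne0; apply: char_sum0 Hne0.
rewrite negb_exists_in => /forall_inP Hall.
case/negP: wnC; apply: double_dual => // s Hs.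
by apply/eqP; rewrite -[_ == _]negbK; apply: Hall.
Qed.


Definition tog (x : 'I_n) (B : {set 'I_n}) := if x \in B then B :\ x else x |: B.

Lemma togK x : involutive (tog x).
Proof.
move=> B; rewrite /tog; case xB: (x \in B).
  by rewrite setD11 setD1K.
by rewrite setU11 setU1K ?xB.
Qed.

Lemma expand (s : word n) (A : {set 'I_n}) :
  \sum_(B : {set 'I_n} | B \subset A) (-1) ^+ #|B| * chi (wvec B) s =
    if A \subset supp s then (2 ^ #|A|)%:R else 0.
Proof.
case: ifP => HA.
  rewrite (eq_bigr (fun _ => 1)).
    rewrite sumr_const -card_powerset; congr (_%:R).
    by apply: eq_card => B; rewrite powersetE.
  move=> B BA; rewrite /chi dot_wvec.
  rewrite (eq_bigr (fun _ => 1)); last first.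
    move=> i iB; have : i \in supp s by apply: (subsetP HA); apply: (subsetP BA).
    by rewrite inE; case: (F2_cases (s 0 i)) => ->.
  by rewrite sumr_const sg_nat -exprMn mulrNN mulr1 expr1n.
case/subsetPn: HA => x xA xs.
have sx : s 0 x = 0 by move: xs; rewrite inE negbK => /eqP.
apply: (@sum_inv0 _ _ (tog x)); first exact: togK.
  move=> B; rewrite /tog; case: ifP => xB.
    by rewrite -{2}(setD1K xB) subUset sub1set xA.
  by rewrite subUset sub1set xA.
move=> B _; rewrite /tog /chi !dot_wvec; case: ifP => xB.
  by rewrite [in RHS](cardsD1 x B) xB [in RHS](big_setD1 _ xB) sx /= add0r exprS mulN1r mulNr opprK.
by rewrite cardsU1 xB big_setU1 ?xB // sx /= add0r exprS mulN1r mulNr.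
Qed.


Lemma core (C : {set word n}) t : is_linear_code C ->
  (forall c, c \in C -> c != 0 -> (2 * t + 1 <= wt c)%N) ->
  forall (N : nat) (a : 'I_N -> {set 'I_n}), injective a ->
  (forall j, (#|a j| <= t)%N) ->
  forall x : 'I_N -> R,
  (forall s, s \in dual_code C -> \sum_j x j * (if a j \subset supp s then 1 else 0) = 0) ->
  forall j, x j = 0.
Proof.
move=> Hlin Hd N a ainj Ha x Hx.
pose y j := x j / (2 ^ #|a j|)%:R.
have p2 j : (2 ^ #|a j|)%:R != 0 :> R by rewrite pnatr_eq0 expn_eq0.
have HA s : s \in dual_code C ->
    \sum_j y j * \sum_(B : {set 'I_n} | B \subset a j) (-1) ^+ #|B| * chi (wvec B) s = 0.
  move=> Hs; rewrite -[RHS](Hx s Hs); apply: eq_bigr => j _; rewrite expand.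
  by case: ifP => _; rewrite ?mulr0 ?mulr1 // divfK.
have HB (b0 : {set 'I_n}) : (#|b0| <= t)%N -> \sum_(j | b0 \subset a j) y j = 0.
  move=> Hb0.
  have E : \sum_(s in dual_code C) chi (wvec b0) s *
      (\sum_j y j * \sum_(B : {set 'I_n} | B \subset a j) (-1) ^+ #|B| * chi (wvec B) s)
      = ((-1) ^+ #|b0| * (#|dual_code C|)%:R) * \sum_(j | b0 \subset a j) y j.
    under eq_bigr => s _ do rewrite mulr_sumr.
    rewrite exchange_big mulr_sumr [RHS]big_mkcond /=; apply: eq_bigr => j _.
    transitivity (y j * \sum_(B : {set 'I_n} | B \subset a j) (-1) ^+ #|B| *
         \sum_(s in dual_code C) chi (wvec b0) s * chi (wvec B) s).
      under eq_bigr => s _ do rewrite mulr_sumr mulr_sumr.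
      rewrite exchange_big mulr_sumr; apply: eq_bigr => B _.
      rewrite mulr_sumr mulr_sumr; apply: eq_bigr => s _; ring.
    under eq_bigr => B HBa do rewrite (orth Hlin Hd (leq_trans (subset_leq_card HBa) (Ha j)) Hb0).
    case: ifP => Hsub.
      rewrite (bigD1 b0) //= eqxx big1 ?addr0 ?mulr0; first by ring.
      by move=> B /andP [_ /negbTE ->]; rewrite mulr0.
    rewrite big1 ?mulr0 // => B HBa; case: eqP => [eB|]; last by rewrite mulr0.
    by rewrite -eB HBa in Hsub.
  move: E; rewrite big1 => [E|s Hs]; last by rewrite HA // mulr0.
  apply/eqP; move/eqP: E; rewrite eq_sym mulf_eq0 => /orP [|/eqP -> //].
  rewrite mulf_eq0 signr_eq0 /= pnatr_eq0 cards_eq0 => /eqP V0.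
  by move: (dual0 C); rewrite V0 inE.
have HC m j : (t - #|a j| < m)%N -> y j = 0.
  elim: m j => [//|m IH] j Hj.
  have := HB _ (Ha j); rewrite (bigD1 j) //= big1 ?addr0 // => j' /andP [Hs Hne].
  apply: IH; have Hp : a j \proper a j'.
    rewrite properEneq Hs andbT; apply: contra Hne => /eqP E.
    by apply/eqP; apply: ainj.
  have := proper_card Hp; have := Ha j'; lia.
move=> j; have := HC (t - #|a j|).+1 j (ltnSn _).
by rewrite /y => /eqP; rewrite mulf_eq0 invr_eq0 (negbTE (p2 j)) orbF => /eqP.
Qed.

End S.

Lemma supp0 n : supp (0 : word n) = set0.
Proof. by apply/setP => i; rewrite !inE mxE eqxx. Qed.

Theorem corollary4 (R : realFieldType) (n t : nat) (C : {set word n}) :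
  is_linear_code C ->
  (1 <= t <= n)%N ->
  (forall c, c \in C -> c != 0 -> (2 * t + 1 <= wt c)%N) ->
  \rank (Dmat R C t) = #|Gamma_le n t|.
Proof.
move=> Hlin Ht Hd.
rewrite -mxrank_tr; apply/eqP; change (row_free (Dmat R C t)^T); rewrite -kermx_eq0.
apply/eqP/row_matrixP => i; rewrite row0.
set r := row i _.
have rD : r *m (Dmat R C t)^T = 0 by rewrite /r -row_mul mulmx_ker row0.
have HG (j : 'I_#|Gamma_le n t|) : (0 < #|(enum_val j : {set 'I_n})|)%N && (#|(enum_val j : {set 'I_n})| <= t)%N.
  by have := enum_valP j; rewrite inE.
apply/rowP => j; rewrite [RHS]mxE.
apply: (@core R n C t Hlin Hd _ (fun j : 'I_#|Gamma_le n t| => enum_val j) (@enum_val_inj _ _) _ (fun j => r 0 j)).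
  by move=> k; case/andP: (HG k).
move=> s Hs; case: (eqVneq s 0) => [->|sn0].
  rewrite big1 // => k _; rewrite supp0 subset0 -cards_eq0.
  by case/andP: (HG k) => /lt0n_neq0 /negbTE ->; rewrite mulr0.
have sS : s \in Sperp C by rewrite inE Hs sn0.
move/rowP: rD => /(_ (enum_rank_in sS s)); rewrite [X in _ = X]mxE mxE => E; apply: (etrans _ E).
apply: eq_bigr => k _; rewrite !mxE enum_rankK_in //.
Qed.
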